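(* Let $P$ be a bounded complete dcpo. If $\Sigma P\times\Sigma P$ is a Fréchet space, then $\Sigma P$ is sober.
   Context: A dcpo is a poset in which every directed subset has a supremum; it is bounded complete if every subset having an upper bound has a supremum. $\Sigma P$ denotes $P$ with the Scott topology (a set $U$ is Scott open iff $U$ is an upper set and for every directed $D$, $\bigvee D\in U$ implies $D\cap U\neq\emptyset$). A topological space is Fréchet if whenever $x$ lies in the closure of a set $A$, some sequence in $A$ converges to $x$. A $T_0$ space is sober if every irreducible closed set equals $\overline{\{x\}}$ for some point $x$. *)

(* Defs.v *)
From mathcomp Require Import all_boot all_order.
Set Implicit Arguments. Unset Strict Implicit. Unset Printing Implicit Defensive.
Import Order.TTheory.
Local Open Scope order_scope.

Section Posets.
Context {disp : Order.disp_t} {P : porderType disp}.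

Definition is_upper_bound (A : P -> Prop) (u : P) : Prop :=
  forall a, A a -> a <= u.

Definition is_sup (A : P -> Prop) (s : P) : Prop :=
  is_upper_bound A s /\ forall u, is_upper_bound A u -> s <= u.

Definition directed (D : P -> Prop) : Prop :=
  (exists d, D d) /\
  forall x y, D x -> D y -> exists z, D z /\ x <= z /\ y <= z.

Definition dcpo : Prop :=
  forall D : P -> Prop, directed D -> exists s, is_sup D s.

Definition bounded_complete : Prop :=
  forall A : P -> Prop, (exists u, is_upper_bound A u) -> exists s, is_sup A s.

Definition upper_set (U : P -> Prop) : Prop :=
  forall x y, U x -> x <= y -> U y.

Definition scott_open (U : P -> Prop) : Prop :=
  upper_set U /\
  forall D : P -> Prop, directed D -> forall s, is_sup D s -> U s ->
    exists d, D d /\ U d.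

End Posets.

Section Topology.
Context {T : Type} (op : (T -> Prop) -> Prop).

Definition closed_in (F : T -> Prop) : Prop := op (fun x => ~ F x).

Definition closure_in (A : T -> Prop) (x : T) : Prop :=
  forall U, op U -> U x -> exists a, U a /\ A a.

Definition seq_converges (u : nat -> T) (x : T) : Prop :=
  forall U, op U -> U x -> exists N, forall n, (N <= n)%N -> U (u n).

Definition frechet : Prop :=
  forall (A : T -> Prop) x, closure_in A x ->
    exists u : nat -> T, (forall n, A (u n)) /\ seq_converges u x.

Definition T0 : Prop :=
  forall x y, x <> y -> exists U, op U /\ ~ (U x <-> U y).

Definition irreducible_closed (F : T -> Prop) : Prop :=
  closed_in F /\ (exists x, F x) /\
  forall F1 F2, closed_in F1 -> closed_in F2 ->
    (forall x, F x -> F1 x \/ F2 x) ->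
    (forall x, F x -> F1 x) \/ (forall x, F x -> F2 x).

Definition sober : Prop :=
  T0 /\ forall F, irreducible_closed F ->
    exists x, forall y, F y <-> closure_in (fun z => z = x) y.

End Topology.

Definition product_open {S T : Type} (opS : (S -> Prop) -> Prop)
  (opT : (T -> Prop) -> Prop) (W : S * T -> Prop) : Prop :=
  forall p, W p -> exists U V, opS U /\ opT V /\ U p.1 /\ V p.2 /\
    forall a b, U a -> V b -> W (a, b).

(* Main.v *)
Require Import Defs.
From mathcomp Require Import all_boot all_order.
From Stdlib Require Import Classical.
Set Implicit Arguments. Unset Strict Implicit. Unset Printing Implicit Defensive.
Import Order.TTheory.
Local Open Scope order_scope.

Section Aux.
Context {disp : Order.disp_t} {P : porderType disp}.

Lemma so_ext (A B : P -> Prop) :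
  (forall x, A x <-> B x) -> scott_open A -> scott_open B.
Proof.
move=> AB [up sc]; split.
- move=> x y /AB Ax xy; apply/AB; exact: up Ax xy.
- move=> D dD s ss /AB As; have [d [Dd Ad]] := sc D dD s ss As.
  by exists d; split => //; apply/AB.
Qed.

Lemma so_true : scott_open (fun _ : P => True).
Proof. split => // D [[d Dd] _] s _ _; by exists d. Qed.

Lemma nle_open (y : P) : scott_open (fun z => ~ z <= y).
Proof.
split.
- move=> x x' nx xx' h; apply: nx; exact: le_trans xx' h.
- move=> D dD s ss ns; apply: NNPP => H; apply: ns; apply: ss.2 => d Dd.
  apply: NNPP => nd; apply: H; by exists d.
Qed.

Lemma closed_lower (F : P -> Prop) : closed_in scott_open F ->
  forall x y, F y -> x <= y -> F x.
Proof.
move=> [up _] x y Fy xy; apply: NNPP => nFx; exact: (up x y nFx xy Fy).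
Qed.

Lemma closed_dir (F : P -> Prop) : closed_in scott_open F ->
  forall D, directed D -> (forall d, D d -> F d) -> forall s, is_sup D s -> F s.
Proof.
move=> [_ sc] D dD DF s ss; apply: NNPP => nFs.
have [d [Dd nFd]] := sc D dD s ss nFs; exact: nFd (DF d Dd).
Qed.

Definition Kb (F : P -> Prop) (x y : P) := exists z, F z /\ x <= z /\ y <= z.

Lemma K_dir (dc : @dcpo disp P) (bc : @bounded_complete disp P)
  (F : P -> Prop) (cF : closed_in scott_open F) (u : P) D s :
  directed D -> is_sup D s -> (forall d, D d -> Kb F u d) -> Kb F u s.
Proof.
move=> [[d0 Dd0] dD] [sub sl] Ku.
pose J := fun j => exists d, D d /\ is_sup (fun w => w = u \/ w = d) j.
have jex : forall d, D d -> exists j, is_sup (fun w => w = u \/ w = d) j.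
  move=> d Dd; apply: bc; have [z [Fz [uz dz]]] := Ku d Dd.
  by exists z => w [->|->].
have dJ : directed J.
  split.
  - have [j hj] := jex d0 Dd0; exists j, d0; done.
  - move=> j1 j2 [d1 [Dd1 [ub1 l1]]] [d2 [Dd2 [ub2 l2]]].
    have [d3 [Dd3 [d13 d23]]] := dD d1 d2 Dd1 Dd2.
    have [j3 [ub3 l3]] := jex d3 Dd3.
    exists j3; split; first by exists d3; split.
    split.
    + apply: l1 => w [->|->]; first exact: ub3 (or_introl erefl).
      apply: le_trans d13 _; exact: ub3 (or_intror erefl).
    + apply: l2 => w [->|->]; first exact: ub3 (or_introl erefl).
      apply: le_trans d23 _; exact: ub3 (or_intror erefl).
have [z [zub zl]] := dc J dJ.
have FJ : forall j, J j -> F j.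
  move=> j [d [Dd [ub l]]]; have [z' [Fz' [uz' dz']]] := Ku d Dd.
  apply: (closed_lower cF Fz'); apply: l => w [->|->] //.
exists z; split; first exact: (closed_dir cF dJ FJ (conj zub zl)).
split.
- have [j hj] := jex d0 Dd0.
  apply: (le_trans (hj.1 _ (or_introl erefl))); apply: zub; by exists d0.
- apply: sl => d Dd; have [j hj] := jex d Dd.
  apply: (le_trans (hj.1 _ (or_intror erefl))); apply: zub; by exists d.
Qed.

Lemma E_closed (dc : @dcpo disp P) (bc : @bounded_complete disp P)
  (F : P -> Prop) (cF : closed_in scott_open F) (u : P) :
  closed_in scott_open (Kb F u).
Proof.
split.
- move=> x y nK xy [z [Fz [uz yz]]]; apply: nK; exists z; split => //; split => //.
  exact: le_trans xy yz.
- move=> D dD s ss nKs; apply: NNPP => H; apply: nKs.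
  apply: (K_dir dc bc cF dD ss) => d Dd; apply: NNPP => nK; apply: H; by exists d.
Qed.

Lemma key (dc : @dcpo disp P) (bc : @bounded_complete disp P)
  (F : P -> Prop) (cF : closed_in scott_open F) (c : nat -> P)
  (HF : forall n, F (c n)) (a b : P) :
  seq_converges scott_open c a -> seq_converges scott_open c b -> Kb F a b.
Proof.
move=> ca cb.
have Ecl := E_closed dc bc cF.
have IH : forall d, (forall N, exists n, (N <= n)%N /\ d <= c n) -> Kb F b d.
  move=> d Id.
  have : Kb F d b.
    apply: NNPP => nK. have [N HN] := cb _ (Ecl d) nK.
    have [n [Nn dn]] := Id N. apply: (HN n Nn).
    exists (c n); split; [exact: HF | split => //].
  by move=> [z [Fz [dz bz]]]; exists z.
pose G M := fun u => Kb F b u \/ exists n, (M <= n)%N /\ u <= c n.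
have Gcl : forall M, closed_in scott_open (G M).
  move=> M; split.
  - move=> x y nG xy Gy; apply: nG; case: Gy => [[z [Fz [bz yz]]]|[n [Mn yc]]].
      left; exists z; split => //; split => //; exact: le_trans xy yz.
    right; exists n; split => //; exact: le_trans xy yc.
  - move=> D dD s ss nGs. apply: NNPP => Hall.
    have DG : forall d, D d -> G M d.
      by move=> d Dd; apply: NNPP => nG; apply: Hall; exists d.
    apply: (nGs).
    have nKs : ~ Kb F b s by move=> K; apply: nGs; left.
    have [d0 [Dd0 nK0]] := (Ecl b).2 D dD s ss nKs.
    have nI0 : ~ (forall N, exists n, (N <= n)%N /\ d0 <= c n).
      by move=> I0; apply: nK0; apply: IH.
    have [N0 HN0] : exists N0, forall n, (N0 <= n)%N -> ~ d0 <= c n.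
      apply: NNPP => H; apply: nI0 => N; apply: NNPP => H2; apply: H.
      exists N => n Nn dn; apply: H2; by exists n.
    have [dD1 dD2] := dD.
    have fin : exists n, (M <= n)%N /\ forall d, D d -> d0 <= d -> d <= c n.
      apply: NNPP => Hno.
      have step : forall k, exists ds, D ds /\ d0 <= ds /\
          forall n, (n < k)%N -> (M <= n)%N -> ~ ds <= c n.
        elim=> [|k [ds [Dds [d0ds Hds]]]]; first by exists d0.
        case: (classic ((M <= k)%N)) => Mk.
        - have [d' [Dd' [d0d' nd']]] : exists d', D d' /\ d0 <= d' /\ ~ d' <= c k.
            apply: NNPP => H; apply: Hno; exists k; split => // d Dd d0d.
            apply: NNPP => nd; apply: H; by exists d.
          have [d'' [Dd'' [dsd'' d'd'']]] := dD2 ds d' Dds Dd'.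
          exists d''; split => //; split; first exact: le_trans d0ds dsd''.
          move=> n; rewrite ltnS leq_eqVlt => /orP [/eqP -> _ | nk Mn] h.
            apply: nd'; exact: le_trans d'd'' h.
          apply: (Hds n nk Mn); exact: le_trans dsd'' h.
        - exists ds; split => //; split => // n.
          rewrite ltnS leq_eqVlt => /orP [/eqP -> //| nk Mn]; exact: Hds.
      have [ds [Dds [d0ds Hds]]] := step N0.
      have nKds : ~ Kb F b ds.
        move=> [z [Fz [bz dsz]]]; apply: nK0; exists z; split => //; split => //.
        exact: le_trans d0ds dsz.
      case: (DG ds Dds) => [//|[n [Mn dsc]]].
      case: (ltnP n N0) => [nN0|N0n]; first exact: Hds n nN0 Mn dsc.
      apply: (HN0 n N0n); exact: le_trans d0ds dsc.
    have [n [Mn Hn]] := fin. right; exists n; split => //.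
    apply: ss.2 => d Dd. have [d' [Dd' [dd' d0d']]] := dD2 d d0 Dd Dd0.
    exact: le_trans dd' (Hn d' Dd' d0d').
have aG : forall M, G M a.
  move=> M; apply: NNPP => nG; have [N HN] := ca _ (Gcl M) nG.
  apply: (HN (maxn N M)); first exact: leq_maxl.
  right; exists (maxn N M); split; [exact: leq_maxr | exact: lexx].
have : Kb F b a.
  case: (classic (Kb F b a)) => // nK; apply: IH => N.
  by case: (aG N) => [//|[n [Nn an]]]; exists n.
by move=> [z [Fz [bz az]]]; exists z.
Qed.

End Aux.

Theorem corollary3p8 (disp : Order.disp_t) (P : porderType disp) :
  @dcpo disp P -> @bounded_complete disp P ->
  frechet (product_open (@scott_open disp P) (@scott_open disp P)) ->
  sober (@scott_open disp P).
Proof.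
move=> dc bc fr; split.
- move=> x y xy; case: (classic (x <= y)) => xy'.
  + have yx : ~ y <= x by move=> yx; apply: xy; apply/le_anti; rewrite xy' yx.
    exists (fun z => ~ z <= x); split; first exact: nle_open.
    by move=> [h1 h2]; apply: (h2 yx); exact: lexx.
  + exists (fun z => ~ z <= y); split; first exact: nle_open.
    by move=> [h1 h2]; apply: (h1 xy'); exact: lexx.
- move=> F [cF [[x0 Fx0] irr]].
  have dirF : directed F.
    split; first by exists x0.
    move=> a b Fa Fb.
    pose A := fun p : P * P => F p.1 /\ p.1 = p.2.
    have clA : closure_in (product_open scott_open scott_open) A (a, b).
      move=> O pO Oab. have [U [V [oU [oV [Ua [Vb UV]]]]]] := pO _ Oab.
      case: (classic (exists c, F c /\ U c /\ V c)) => [[c [Fc [Uc Vc]]]|H].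
        by exists (c, c); split; [exact: UV | split].
      have cl1 : closed_in scott_open (fun x => ~ U x).
        apply: so_ext oU => z; split => [h nn|h]; [exact: nn h | exact: NNPP].
      have cl2 : closed_in scott_open (fun x => ~ V x).
        apply: so_ext oV => z; split => [h nn|h]; [exact: nn h | exact: NNPP].
      have cov : forall x, F x -> ~ U x \/ ~ V x.
        move=> z Fz; apply: NNPP => nn; apply: H; exists z; split => //.
        split; apply: NNPP => h; apply: nn; [left|right]; exact: h.
      by case: (irr _ _ cl1 cl2 cov) => h; [case: (h a Fa) | case: (h b Fb)].
    have [u [Au cu]] := fr A (a, b) clA.
    pose c := fun n => (u n).1.
    have ca : seq_converges scott_open c a.
      move=> U oU Ua; apply: (cu (fun p => U p.1)) => //.
      move=> p Up; exists U, (fun _ => True).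
      by split => //; split; [exact: so_true|split => //].
    have cb : seq_converges scott_open c b.
      move=> U oU Ub.
      have pU : product_open scott_open scott_open (fun p : P * P => U p.2).
        move=> p Up; exists (fun _ => True), U.
        by split; [exact: so_true|split => //].
      have [N HN] := cu (fun p => U p.2) pU Ub.
      by exists N => n Nn; rewrite /c (Au n).2; exact: HN.
    have [z [Fz [az bz]]] := key dc bc cF (fun n => (Au n).1) ca cb.
    by exists z.
  have [s ss] := dc F dirF.
  have Fs : F s := closed_dir cF dirF (fun d h => h) ss.
  exists s => y; split.
  + move=> Fy U oU Uy; exists s; split => //; exact: oU.1 y s Uy (ss.1 y Fy).
  + move=> cly; apply: (closed_lower cF Fs).
    apply: NNPP => nys; have [w [nw ws]] := cly _ (nle_open s) nys.
    by apply: nw; rewrite ws.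
Qed.
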